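(* The subgroup $\mathrm{B}_2(\mathbb{C}[z])$ of upper triangular matrices of $\mathrm{GL}_2(\mathbb{C}[z])$ is a maximal solvable subgroup: every subgroup of $\mathrm{GL}_2(\mathbb{C}[z])$ strictly containing it is not solvable.
   Context: $\mathrm{GL}_2(\mathbb{C}[z])$ is the group of $2\times2$ matrices over the polynomial ring $\mathbb{C}[z]$ that are invertible over $\mathbb{C}[z]$ (determinant in $\mathbb{C}^*$). *)

(* Defs.v *)
From mathcomp Require Import all_boot all_algebra.
From mathcomp Require Import reals Rstruct.
From mathcomp.real_closed Require Import complex.
Set Implicit Arguments. Unset Strict Implicit. Unset Printing Implicit Defensive.
Import GRing.Theory.
Local Open Scope ring_scope.

Definition CC : idomainType := complex Rdefinitions.R.

Definition M2 := 'M[{poly CC}]_2.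

Definition GL2 : M2 -> Prop := fun A => A \in unitmx.

Definition B2 : M2 -> Prop :=
  fun A => GL2 A /\ (forall i j : 'I_2, (j < i)%N -> A i j = 0).

Definition is_subgroup_GL2 (H : M2 -> Prop) : Prop :=
  (forall A, H A -> GL2 A) /\ H 1 /\
  (forall A B, H A -> H B -> H (A * B)) /\ (forall A, H A -> H A^-1).

Definition commg_r {T : unitRingType} (a b : T) : T := a^-1 * b^-1 * a * b.

(* The derived subgroup [H, H]: the subgroup generated by the commutators of
   elements of H, i.e. all finite products of such commutators (the set of
   commutators is closed under inversion). *)
Definition derived {T : unitRingType} (H : T -> Prop) : T -> Prop :=
  fun x => exists s : seq (T * T),
    (forall p, List.In p s -> H p.1 /\ H p.2) /\
    x = foldr (fun p acc => commg_r p.1 p.2 * acc) 1 s.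

Definition derived_series {T : unitRingType} (n : nat) (H : T -> Prop) : T -> Prop :=
  iter n (@derived T) H.

Definition solvable_grp {T : unitRingType} (H : T -> Prop) : Prop :=
  exists n : nat, forall x, derived_series n H x <-> x = 1.

(* Main.v *)
Require Import Defs.
From mathcomp Require Import all_boot all_algebra.
From mathcomp Require Import reals Rstruct.
From mathcomp.real_closed Require Import complex.
From mathcomp Require Import ring.
Import GRing.Theory Num.Theory.
Local Open Scope ring_scope.

Definition mk2 {R : nzRingType} (a b c d : R) : 'M[R]_2 :=
  \matrix_(i < 2, j < 2) if i == 0 then (if j == 0 then a else b) else (if j == 0 then c else d).
Lemma mk2M {R : nzRingType} (a b c d a' b' c' d' : R) :
  mk2 a b c d * mk2 a' b' c' d' = mk2 (a*a'+b*c') (a*b'+b*d') (c*a'+d*c') (c*b'+d*d').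
Proof. apply/matrixP=> i j; rewrite !mxE !big_ord_recl big_ord0 !mxE.
by case: i => [[|[|//]] ?]; case: j => [[|[|//]] ?] /=; rewrite addr0. Qed.
Lemma mk2_eta {R : nzRingType} (X : 'M[R]_2) : X = mk2 (X 0 0) (X 0 1) (X 1 0) (X 1 1).
Proof. apply/matrixP=> i j; rewrite !mxE.
case: i => [[|[|//]] ?]; case: j => [[|[|//]] ?] /=; congr (X _ _); exact: val_inj. Qed.
Lemma mk2_1 {R : nzRingType} : (1 : 'M[R]_2) = mk2 1 0 0 1.
Proof. apply/matrixP=> i j; rewrite !mxE.
by case: i => [[|[|//]] ?]; case: j => [[|[|//]] ?]. Qed.
Lemma mk2_inj {R : nzRingType} (a b c d a' b' c' d' : R) :
  mk2 a b c d = mk2 a' b' c' d' -> [/\ a = a', b = b', c = c' & d = d'].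
Proof. move=> /matrixP E. have := E 0 0; have := E 0 1; have := E 1 0; have := E 1 1.
by rewrite !mxE. Qed.
Lemma mk2_eq {R : nzRingType} (a b c d a' b' c' d' : R) :
  a = a' -> b = b' -> c = c' -> d = d' -> mk2 a b c d = mk2 a' b' c' d'.
Proof. by move=> -> -> -> ->. Qed.
Lemma mk2E00 {R : nzRingType} (a b c d : R) : mk2 a b c d 0 0 = a. Proof. by rewrite mxE. Qed.
Lemma mk2E01 {R : nzRingType} (a b c d : R) : mk2 a b c d 0 1 = b. Proof. by rewrite mxE. Qed.
Lemma mk2E10 {R : nzRingType} (a b c d : R) : mk2 a b c d 1 0 = c. Proof. by rewrite mxE. Qed.
Lemma mk2E11 {R : nzRingType} (a b c d : R) : mk2 a b c d 1 1 = d. Proof. by rewrite mxE. Qed.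
Lemma mk2_det {R : comNzRingType} (a b c d : R) : \det (mk2 a b c d) = a * d - b * c.
Proof. rewrite (expand_det_row _ 0) !big_ord_recl big_ord0.
rewrite /cofactor !det_mx11 !mxE /bump /=; ring. Qed.

Lemma inv2 {R : comUnitRingType} {X Y : 'M[R]_2} :
  X * Y = 1 -> X \is a GRing.unit /\ X^-1 = Y.
Proof. move=> E; have [uX _] := mulmx1_unit E.
have uX' : X \is a GRing.unit by [].
split=> //; by rewrite -[Y]mul1r -(mulVr uX') -mulrA E mulr1. Qed.

Definition F : fieldType := complex Rdefinitions.R.
Definition M2F := 'M[F]_2.

Definition Um (t : F) : M2F := mk2 1 t 0 1.
Definition Lm (t : F) : M2F := mk2 1 0 t 1.
Definition Hd : M2F := mk2 2 0 0 (1/2).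

Lemma two_neq0 : (2 : F) != 0. Proof. by rewrite pnatr_eq0. Qed.
Lemma three_neq0 : (3 : F) != 0. Proof. by rewrite pnatr_eq0. Qed.

Lemma UmV t : Um t \is a GRing.unit /\ (Um t)^-1 = Um (-t).
Proof. apply: inv2; rewrite /Um mk2M mk2_1; apply: mk2_eq; ring. Qed.
Lemma LmV t : Lm t \is a GRing.unit /\ (Lm t)^-1 = Lm (-t).
Proof. apply: inv2; rewrite /Lm mk2M mk2_1; apply: mk2_eq; ring. Qed.
Lemma HdV : Hd \is a GRing.unit /\ Hd^-1 = mk2 (1/2) 0 0 2.
Proof. apply: inv2; rewrite /Hd mk2M mk2_1; have := two_neq0 => h;
  apply: mk2_eq; field=> //. Qed.

Lemma commU t : commg_r Hd (Um (4/3 * t)) = Um t.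
Proof. rewrite /commg_r (proj2 HdV) (proj2 (UmV _)) /Hd /Um !mk2M.
have := two_neq0; have := three_neq0 => h3 h2; apply: mk2_eq; field; 
  by rewrite ?h2 ?h3 ?mulf_neq0. Qed.
Lemma commL t : commg_r Hd (Lm (-(1/3) * t)) = Lm t.
Proof. rewrite /commg_r (proj2 HdV) (proj2 (LmV _)) /Hd /Lm !mk2M.
have := two_neq0; have := three_neq0 => h3 h2; apply: mk2_eq; field;
  by rewrite ?h2 ?h3 ?mulf_neq0. Qed.
Lemma HdE : Hd = Um 2 * Lm (-(1/2)) * Um 2 * Um (-1) * Lm 1 * Um (-1).
Proof. rewrite /Hd /Um /Lm !mk2M.
have := two_neq0 => h2; apply: mk2_eq; field; by rewrite ?h2. Qed.

Definition ev (z : F) (X : M2) : M2F :=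
  mk2 ((X 0 0).[z] : F) (X 0 1).[z] (X 1 0).[z] (X 1 1).[z].

Lemma ev_mk2 z (a b c d : {poly CC}) :
  ev z (mk2 a b c d) = mk2 (a.[z] : F) b.[z] c.[z] d.[z].
Proof. by rewrite /ev !mk2E00 !mk2E01 !mk2E10 !mk2E11. Qed.

Lemma evM z (X Y : M2) : ev z (X * Y) = ev z X * ev z Y.
Proof. rewrite (mk2_eta X) (mk2_eta Y) mk2M !ev_mk2 mk2M.
by apply: mk2_eq; rewrite !hornerE. Qed.

Lemma ev1 z : ev z 1 = 1.
Proof. by rewrite mk2_1 ev_mk2 mk2_1 !hornerE. Qed.

Lemma evV z (X : M2) : X \in unitmx ->
  ev z X \is a GRing.unit /\ ev z (X^-1) = (ev z X)^-1.
Proof. move=> uX. have uX' : X \is a GRing.unit by [].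
have E : ev z X * ev z (X^-1) = 1 by rewrite -evM mulrV // ev1.
by have [u ->] := inv2 E. Qed.

Definition liftm (a b c d : F) : M2 := mk2 (a%:P) (b%:P) (c%:P) (d%:P).

Lemma ev_liftm z a b c d : ev z (liftm a b c d) = mk2 a b c d.
Proof. by rewrite /liftm ev_mk2 !hornerC. Qed.

Lemma B2E (X : M2) : B2 X <-> X \in unitmx /\ X 1 0 = 0.
Proof. split=> [[u h]|[u h]]; first by split=> //; apply: h.
split=> // i j; case: i => [[|[|//]] ?]; case: j => [[|[|//]] ?] //= _.
by rewrite -h; congr (X _ _); apply: val_inj. Qed.

Lemma B2_lift (a b d : F) : a * d != 0 -> B2 (liftm a b 0 d).
Proof. move=> ad; apply/B2E; split; last by rewrite /liftm mk2E10.
rewrite unitmxE /liftm mk2_det mulr0 subr0 -polyCM.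
by rewrite poly_unitE size_polyC ad coefC /= unitfE. Qed.

Lemma B2_form (X : M2) : B2 X -> exists a b d a' b' d' : {poly CC},
  [/\ X = mk2 a b 0 d, X^-1 = mk2 a' b' 0 d', a' * a = 1 & d' * d = 1].
Proof. move=> /B2E [u h]. rewrite (mk2_eta X) h in u *.
set a := X 0 0; set b := X 0 1; set d := X 1 1.
move: u; rewrite unitmxE mk2_det mulr0 subr0 unitrM => /andP [ua ud].
exists a, b, d, a^-1, (- (a^-1 * b * d^-1)), d^-1; split=> //;
  try by rewrite mulVr.
apply: (proj2 (inv2 _)); rewrite mk2M mk2_1; apply: mk2_eq.
- by rewrite mulr0 addr0 mulrV.
- by rewrite mulrN !mulrA mulrV // mul1r addNr.
- by rewrite mul0r mulr0 addr0.
- by rewrite mul0r add0r mulrV.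
Qed.

Lemma B2_sub : is_subgroup_GL2 B2.
Proof. split; first by move=> A [].
split; first by apply/B2E; split; [exact: unitmx1 | rewrite mxE].
split.
- move=> A B /B2E [uA hA] /B2E [uB hB]; apply/B2E; split.
    by rewrite -mulmxE unitmx_mul uA uB.
  by rewrite (mk2_eta A) (mk2_eta B) mk2M mk2E10 hA hB mul0r mulr0 addr0.
- move=> A hA; have [uA _] := hA.
  have uA' : A \is a GRing.unit by [].
  have [a [b [d [a' [b' [d' [EA EA' _ _]]]]]]] := B2_form _ hA.
  apply/B2E; split; last by rewrite EA' mk2E10.
  by have : A^-1 \is a GRing.unit by rewrite unitrV.
Qed.

Definition Un (X : M2) := X 0 0 = 1 /\ X 1 0 = 0 /\ X 1 1 = 1.

Lemma Un1 : Un 1. Proof. by rewrite /Un !mxE. Qed.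

Lemma UnM X Y : Un X -> Un Y -> Un (X * Y).
Proof. move=> [h1 [h2 h3]] [k1 [k2 k3]].
rewrite /Un (mk2_eta X) (mk2_eta Y) mk2M mk2E00 mk2E10 mk2E11 h1 h2 h3 k1 k2 k3.
by rewrite !mulr0 !mul0r !mulr1 !addr0 !add0r. Qed.

Lemma comm_B2 X Y : B2 X -> B2 Y -> Un (commg_r X Y).
Proof.
move=> /B2_form [a [b [d [a' [b' [d' [EX EX' ha hd]]]]]]].
move=> /B2_form [e [f [g [e' [f' [g' [EY EY' he hg]]]]]]].
rewrite /commg_r EX' EY' EX EY !mk2M /Un mk2E00 mk2E10 mk2E11; split; last split.
- transitivity ((a' * a) * (e' * e)); first ring. by rewrite ha he mulr1.
- ring.
- transitivity ((d' * d) * (g' * g)); first ring. by rewrite hd hg mulr1.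
Qed.

Lemma comm_Un X Y : Un X -> Un Y -> commg_r X Y = 1.
Proof.
move=> [h1 [h2 h3]] [k1 [k2 k3]].
rewrite (mk2_eta X) (mk2_eta Y) h1 h2 h3 k1 k2 k3.
set p := X 0 1; set q := Y 0 1.
have iX : (mk2 1 p 0 1 : M2)^-1 = mk2 1 (-p) 0 1.
  by apply: (proj2 (inv2 _)); rewrite mk2M mk2_1; apply: mk2_eq; ring.
have iY : (mk2 1 q 0 1 : M2)^-1 = mk2 1 (-q) 0 1.
  by apply: (proj2 (inv2 _)); rewrite mk2M mk2_1; apply: mk2_eq; ring.
rewrite /commg_r iX iY !mk2M mk2_1; apply: mk2_eq; ring.
Qed.

Lemma B2_solv : solvable_grp B2.
Proof.
exists 2 => x; split; last first.
  by move=> ->; exists [::]; split.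
move=> [s [hs ->]].
elim: s hs => [//|[p1 p2] s IH] hs /=.
have [h1 h2] := hs _ (or_introl erefl).
have U1 : forall y, derived B2 y -> Un y.
  move=> y [r [hr ->]]; elim: r hr => [|[r1 r2] r IHr] hr; first by apply: Un1.
  rewrite /=.
  have [g1 g2] := hr _ (or_introl erefl).
  apply: UnM; first exact: comm_B2.
  by apply: IHr => q hq; apply: hr; right.
rewrite /= in h1 h2.
rewrite (comm_Un _ _ (U1 _ h1) (U1 _ h2)) mul1r; apply: IH => q hq; apply: hs; by right.
Qed.

Lemma unit_comm (X Y : M2) : X \is a GRing.unit -> Y \is a GRing.unit ->
  commg_r X Y \is a GRing.unit.
Proof. by move=> uX uY; rewrite /commg_r !unitrMl ?unitrV. Qed.

Lemma ev_comm z (X Y : M2) : X \is a GRing.unit -> Y \is a GRing.unit ->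
  ev z (commg_r X Y) = commg_r (ev z X) (ev z Y).
Proof. move=> uX uY; by rewrite /commg_r !evM (proj2 (evV z X uX)) (proj2 (evV z Y uY)). Qed.

Lemma derivedM (P : M2 -> Prop) x y : derived P x -> derived P y -> derived P (x * y).
Proof.
move=> [s1 [h1 ->]] [s2 [h2 ->]]; exists (s1 ++ s2); split.
  move=> p; elim: s1 h1 => [|q s1 IH] h1 /=; first exact: h2.
  case=> [<-|hp]; first by apply: h1; left.
  by apply: IH => // r hr; apply: h1; right.
elim: s1 {h1} => [|q s1 IH] /=; first by rewrite mul1r.
by rewrite -mulrA IH.
Qed.

Definition Rn (H : M2 -> Prop) (z : F) n (M : M2F) :=
  exists X, derived_series n H X /\ X \is a GRing.unit /\ ev z X = M.

Lemma Rcomm H z n M N : Rn H z n M -> Rn H z n N -> Rn H z n.+1 (commg_r M N).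
Proof.
move=> [X [dX [uX eX]]] [Y [dY [uY eY]]].
exists (commg_r X Y); split; last split.
- exists [:: (X, Y)]; split; last by rewrite /= mulr1.
  by move=> p [<-|[]].
- exact: unit_comm.
- by rewrite ev_comm // eX eY.
Qed.

Lemma Rmul H z n M N : Rn H z n.+1 M -> Rn H z n.+1 N -> Rn H z n.+1 (M * N).
Proof.
move=> [X [dX [uX eX]]] [Y [dY [uY eY]]].
exists (X * Y); split; last split.
- exact: derivedM.
- by rewrite unitrMl.
- by rewrite evM eX eY.
Qed.

Lemma Rstep H z n : (forall t, Rn H z n (Um t)) -> (forall t, Rn H z n (Lm t)) ->
  Rn H z n Hd ->
  (forall t, Rn H z n.+1 (Um t)) /\ (forall t, Rn H z n.+1 (Lm t)) /\ Rn H z n.+1 Hd.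
Proof.
move=> hU hL hH.
have hU' : forall t, Rn H z n.+1 (Um t) by move=> t; rewrite -commU; exact: Rcomm.
have hL' : forall t, Rn H z n.+1 (Lm t) by move=> t; rewrite -commL; exact: Rcomm.
split=> //; split=> //.
rewrite HdE; do 5 (apply: Rmul; last by [apply: hU' | apply: hL']).
by [apply: hU' | apply: hL'].
Qed.

Lemma Lbase (H : M2 -> Prop) (A : M2) (z : F) :
  is_subgroup_GL2 H -> (forall A, B2 A -> H A) -> H A ->
  (A 1 0).[z] != 0 -> forall t, Rn H z 0 (Lm t).
Proof.
move=> HS hB hA hc t; have [hG [h1 [hM hV]]] := HS.
have uA : A \is a GRing.unit by exact: (hG).
set a : F := (A 0 0).[z]; set b : F := (A 0 1).[z];
set c : F := (A 1 0).[z]; set d : F := (A 1 1).[z].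
set s : F := t * (b - a * d / c) / c.
set U1 := liftm 1 (- a / c) 0 1.
have hU1 : B2 U1 by apply: B2_lift; rewrite mulr1 oner_neq0.
have hU2 : B2 (liftm 1 s 0 1) by apply: B2_lift; rewrite mulr1 oner_neq0.
have uU1 : U1 \is a GRing.unit by have [] := hU1.
have hX : H (U1 * A * liftm 1 s 0 1 * A^-1 * U1^-1).
  apply: (hM); last by apply: (hV); apply: (hB).
  apply: (hM); last by apply: (hV).
  apply: (hM); last by apply: (hB).
  by apply: (hM) => //; apply: (hB).
exists (U1 * A * liftm 1 s 0 1 * A^-1 * U1^-1); split; last split.
- exact: hX.
- exact: (hG).
rewrite !evM (proj2 (evV z A uA)) (proj2 (evV z U1 uU1)) !ev_liftm.
have -> : ev z A = mk2 a b c d by [].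
have uA0 : mk2 a b c d \is a GRing.unit.
  by rewrite -[mk2 a b c d]/(ev z A); exact: (proj1 (evV z A uA)).
have uU : Um (- a / c) \is a GRing.unit by exact: (proj1 (UmV _)).
rewrite -/(Um (-a / c)) -/(Um s).
set M1 := Um (- a / c) * mk2 a b c d.
have uM1 : M1 \is a GRing.unit by rewrite unitrMl.
have key : M1 * Um s = Lm t * M1.
  rewrite /M1 /Um /Lm /s !mk2M; apply: mk2_eq; field; done.
by rewrite -mulrA -(invrM uU uA0) -/M1 key mulrK.
Qed.

Lemma notsolv (H : M2 -> Prop) : is_subgroup_GL2 H ->
  (forall A, B2 A -> H A) -> (exists A, H A /\ ~ B2 A) -> ~ solvable_grp H.
Proof.
move=> HS hB [A [hA nB]] [N hN].
have [hG _] := HS.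
have uA := hG _ hA.
have cnz : (A 1 0 : {poly F}) != 0.
  by apply/negP => /eqP h; apply: nB; apply/B2E; split.
have /closed_nonrootP [z hz] := cnz.
have base : (forall t, Rn H z 0 (Um t)) /\ (forall t, Rn H z 0 (Lm t)) /\ Rn H z 0 Hd.
  split; last split.
  - move=> t; exists (liftm 1 t 0 1); split; first by apply: hB; apply: B2_lift;
      rewrite mulr1 oner_neq0.
    split; last exact: ev_liftm.
    have : B2 (liftm 1 t 0 1) by apply: B2_lift; rewrite mulr1 oner_neq0.
    by case.
  - exact: (Lbase _ _ z HS hB hA hz).
  - have hb : B2 (liftm 2 0 0 (1/2)).
      by apply: B2_lift; rewrite mulf_neq0 // ?div1r ?invr_eq0 two_neq0.
    exists (liftm 2 0 0 (1/2)); split; first exact: hB.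
    split; last exact: ev_liftm.
    by case: hb.
have all_n : forall n, (forall t, Rn H z n (Um t)) /\ (forall t, Rn H z n (Lm t)) /\ Rn H z n Hd.
  elim=> [//|n [IH1 [IH2 IH3]]]; exact: Rstep.
have [hUN _] := all_n N.
have [X [dX [_ eX]]] := hUN 1.
have X1 : X = 1 by apply/(hN X).
move: eX; rewrite X1 ev1 /Um mk2_1 => /mk2_inj [_ h _ _].
by move: (oner_neq0 F); rewrite -h eqxx.
Qed.

Theorem lemma3p23 :
  is_subgroup_GL2 B2 /\ solvable_grp B2 /\
  (forall H : M2 -> Prop, is_subgroup_GL2 H ->
     (forall A, B2 A -> H A) -> (exists A, H A /\ ~ B2 A) ->
     ~ solvable_grp H).
Proof. split; first exact: B2_sub. split; first exact: B2_solv. exact: notsolv. Qed.
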